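(* Let $V$ be a $C^1$ vector field on a closed Riemannian manifold $M$ and let $r_0>0$ be a constant with properties (P1)–(P3) below. There exists $\delta_0>0$ such that for any $\delta\in(0,\delta_0)$, any $x\in M\setminus Sing(V)$, any $y\in M$ and any increasing homeomorphism $h:\mathbb{R}\to\mathbb{R}$: if $d(V_t(x),V_{h(t)}(y))<\delta\|V(V_t(x))\|$ for all $t\in\mathbb{R}$ and $V_{h(0)}(y)\in V_{(-r_0,r_0)}(x)$, then $V_{h(t)}(y)\in V_{(-3\delta,3\delta)}(V_t(x))$ for every $t\in\mathbb{R}$.
   Context: $M$ is a compact connected boundaryless manifold with Riemannian metric $\|\cdot\|$, distance $d$, exponential map $\exp$; $V_t$ is the flow of $V$, $V_I(x)=\{V_t(x):t\in I\}$, $Sing(V)=\{V=0\}$, $B(x,r)$ the open ball. For $x\notin Sing(V)$ and $r>0$ set $N_x(r)=\{v\in T_xM: v\perp V(x),\|v\|<r\}$, $U_x(r)=\{v+tV(x): v\in N_x(r\|V(x)\|), |t|<r\}$, and $F_x:U_x(r)\to M$, $F_x(v+tV(x))=V_t(\exp_x(v))$. The constant $r_0>0$ (whose existence is known) satisfies, for every $x\in M\setminus Sing(V)$: (P1) $F_x:U_x(r_0)\to M$ is an embedding with $\|D_pF_x\|<3$ and $\inf_{\|v\|=1}\|D_pF_x v\|>1/3$ for all $p\in U_x(r_0)$; (P2) if $0<\delta<r_0/3$, $t\in\mathbb{R}$ and $V_{[0,t]}(x)\subset B(x,\delta\|V(x)\|)$, then $|t|<3\delta$; (P3) if $0<\delta<r_0/3$,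 $|t|<r_0$ and $V_t(x)\in B(x,\delta\|V(x)\|)$, then $|t|<3\delta$. *)

(* Defs.v *)
From Stdlib Require Import Reals.
Open Scope R_scope.

(* Abstract setting: the closed Riemannian manifold M is seen through its
   Riemannian distance d, the flow V_t of V and the speed x |-> ||V(x)||. *)

Definition is_metric {M : Type} (d : M -> M -> R) : Prop :=
  (forall x y, 0 <= d x y) /\
  (forall x y, d x y = 0 <-> x = y) /\
  (forall x y, d x y = d y x) /\
  (forall x y z, d x z <= d x y + d y z).

Definition ball_d {M : Type} (d : M -> M -> R) (x : M) (r : R) : M -> Prop :=
  fun z => d x z < r.

Definition open_d {M : Type} (d : M -> M -> R) (U : M -> Prop) : Prop :=
  forall x, U x -> exists r, 0 < r /\ forall z, ball_d d x r z -> U z.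

Definition compact_d {M : Type} (d : M -> M -> R) : Prop :=
  forall u : nat -> M, exists (phi : nat -> nat) (l : M),
    (forall n m, (n < m)%nat -> (phi n < phi m)%nat) /\
    forall eps, 0 < eps -> exists N, forall n, (N <= n)%nat -> d (u (phi n)) l < eps.

Definition connected_d {M : Type} (d : M -> M -> R) : Prop :=
  forall U W : M -> Prop, open_d d U -> open_d d W ->
    (forall x, U x \/ W x) -> (forall x, ~ (U x /\ W x)) ->
    (forall x, U x) \/ (forall x, W x).

Definition nonempty (M : Type) : Prop := exists x : M, True.

Definition is_flow {M : Type} (d : M -> M -> R) (Vt : R -> M -> M) : Prop :=
  (forall x, Vt 0 x = x) /\
  (forall s t x, Vt (s + t) x = Vt s (Vt t x)) /\
  (forall t x eps, 0 < eps -> exists eta, 0 < eta /\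
     forall s z, Rabs (s - t) < eta -> d x z < eta -> d (Vt t x) (Vt s z) < eps).

(* speed function nV x = ||V(x)||: continuous, nonnegative, and vanishing
   exactly at singularities (= fixed points of the flow). *)
Definition is_speed {M : Type} (d : M -> M -> R) (Vt : R -> M -> M) (nV : M -> R) : Prop :=
  (forall x, 0 <= nV x) /\
  (forall x, nV x = 0 <-> forall t, Vt t x = x) /\
  (forall x eps, 0 < eps -> exists eta, 0 < eta /\
     forall z, d x z < eta -> Rabs (nV x - nV z) < eps).

Definition Sing {M : Type} (nV : M -> R) (x : M) : Prop := nV x = 0.

Definition orbit_seg {M : Type} (Vt : R -> M -> M) (a b : R) (x : M) : M -> Prop :=
  fun z => exists t, a < t < b /\ z = Vt t x.

Definition P2 {M : Type} (d : M -> M -> R) (Vt : R -> M -> M) (nV : M -> R) (r0 : R) : Prop :=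
  forall x, ~ Sing nV x -> forall delta t, 0 < delta < r0 / 3 ->
    (forall s, (0 <= s <= t \/ t <= s <= 0) -> ball_d d x (delta * nV x) (Vt s x)) ->
    Rabs t < 3 * delta.

Definition P3 {M : Type} (d : M -> M -> R) (Vt : R -> M -> M) (nV : M -> R) (r0 : R) : Prop :=
  forall x, ~ Sing nV x -> forall delta t, 0 < delta < r0 / 3 -> Rabs t < r0 ->
    ball_d d x (delta * nV x) (Vt t x) -> Rabs t < 3 * delta.

Definition incr_homeo (h : R -> R) : Prop :=
  (forall s t, s < t -> h s < h t) /\
  (forall t, continuity_pt h t) /\
  (forall u, exists t, h t = u).

(* Main.v *)
Require Import Defs.
From Stdlib Require Import Reals Lra Psatz.
Open Scope R_scope.

Theorem lemma2p6 :
  forall (M : Type) (d : M -> M -> R) (Vt : R -> M -> M) (nV : M -> R) (r0 : R),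
    nonempty M -> is_metric d -> compact_d d -> connected_d d ->
    is_flow d Vt -> is_speed d Vt nV ->
    0 < r0 -> P2 d Vt nV r0 -> P3 d Vt nV r0 ->
    exists delta0, 0 < delta0 /\
      forall delta, 0 < delta < delta0 ->
      forall (x : M), ~ Sing nV x ->
      forall (y : M) (h : R -> R), incr_homeo h ->
        (forall t, d (Vt t x) (Vt (h t) y) < delta * nV (Vt t x)) ->
        orbit_seg Vt (- r0) r0 x (Vt (h 0) y) ->
        forall t, orbit_seg Vt (- (3 * delta)) (3 * delta) (Vt t x) (Vt (h t) y).
Proof.
  intros M d Vt nV r0 _ _ _ _ [F0 [Fadd _]] [_ [Sp _]] Hr0 _ HP3.
  exists (r0 / 3). split; [lra|].
  intros delta Hd x Hx y h [_ [hc _]] Hdist [s0 [Hs0 Hy0]] t.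
  set (g := fun t => h t - h 0 + s0 - t).
  assert (Hz : forall t, Vt (h t) y = Vt (g t) (Vt t x)).
  { intro u. unfold g. rewrite <- Fadd.
    replace (h u - h 0 + s0 - u + u) with ((h u - h 0) + s0) by ring.
    rewrite Fadd, <- Hy0, <- Fadd. f_equal. ring. }
  assert (Hns : forall u, ~ Sing nV (Vt u x)).
  { intros u Hu. apply Hx. unfold Sing in *. apply Sp. intro s.
    apply (proj1 (Sp _)) with (t := s) in Hu.
    replace s with (-u + (s + u)) by ring. rewrite Fadd, Fadd, Hu, <- Fadd.
    replace (-u + u) with 0 by ring. apply F0. }
  assert (Key : forall u, Rabs (g u) < r0 -> Rabs (g u) < 3 * delta).
  { intros u Hu. apply (HP3 (Vt u x) (Hns u) delta (g u)); [lra|exact Hu|].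
    unfold ball_d. rewrite <- Hz. apply Hdist. }
  assert (Hg0 : Rabs (g 0) < 3 * delta).
  { apply Key. unfold g. replace (h 0 - h 0 + s0 - 0) with s0 by ring.
    apply Rabs_def1; lra. }
  assert (Hc : continuity (fun u => Rabs (g u) - 3 * delta)).
  { apply continuity_minus; [|apply continuity_const; intros a b; reflexivity].
    apply (continuity_comp g Rabs); [|apply Rcontinuity_abs].
    unfold g. apply continuity_minus.
    - apply continuity_plus; [|apply continuity_const; intros a b; reflexivity].
      apply continuity_minus; [exact hc|apply continuity_const; intros a b; reflexivity].
    - apply derivable_continuous, derivable_id. }
  assert (Hgt : Rabs (g t) < 3 * delta).
  { destruct (Rlt_or_le (Rabs (g t)) (3 * delta)) as [H|H]; [exact H|exfalso].
    assert (Ex : exists z, Rabs (g z) - 3 * delta = 0).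
    { destruct (Rle_or_lt 0 t) as [Ht|Ht].
      - destruct (IVT_cor _ 0 t Hc Ht) as [z [_ Hz']].
        + nra.
        + exists z; exact Hz'.
      - destruct (IVT_cor _ t 0 Hc (Rlt_le _ _ Ht)) as [z [_ Hz']].
        + nra.
        + exists z; exact Hz'. }
    destruct Ex as [z Hz'].
    assert (Rabs (g z) < 3 * delta) by (apply Key; lra). lra. }
  exists (g t). split.
  - apply Rabs_def2 in Hgt. lra.
  - apply Hz.
Qed.
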